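(* With $H,\boldsymbol{P}^h,\boldsymbol{A}^h,\boldsymbol{W}_V^h,\boldsymbol{W}_O^h,\alpha,\sigma_1,\sigma_2$ and $\mathrm{MSA}$ as follows — $\boldsymbol{A}^h=\mathrm{softmax}(\boldsymbol{P}^h)$ for $h=1,\dots,H$, $\alpha=\max_h\max_{i,j}\lvert\boldsymbol{P}^h_{ij}\rvert$, $\sigma_1=\max_h\lVert\boldsymbol{W}_V^h\rVert_2$, $\sigma_2=\max_h\lVert\boldsymbol{W}_O^h\rVert_2$, $\mathrm{MSA}(\boldsymbol{X})=\sum_{h=1}^H\boldsymbol{A}^h\boldsymbol{X}\boldsymbol{W}_V^h\boldsymbol{W}_O^h$ — let $\boldsymbol{X}\in\mathbb{R}^{n\times d}$ and $\boldsymbol{X}'=\mathrm{MSA}(\boldsymbol{X})+\boldsymbol{X}$. Then $$\lVert\mathrm{HC}[\boldsymbol{X}']\rVert_F\le\Big(1+\sigma_1\sigma_2H\sqrt{\tfrac{ne^{2\alpha}}{e^{2\alpha}+n-1}}\Big)\lVert\mathrm{HC}[\boldsymbol{X}]\rVert_F.$$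
   Context: $\boldsymbol{P}^h\in\mathbb{R}^{n\times n}$, $\boldsymbol{W}_V^h,\boldsymbol{W}_O^h\in\mathbb{R}^{d\times d}$. $\mathrm{softmax}$ is applied row-wise: $\mathrm{softmax}(\boldsymbol{P})_{ij}=e^{\boldsymbol{P}_{ij}}/\sum_t e^{\boldsymbol{P}_{it}}$. $\mathrm{HC}[\boldsymbol{X}]=(\boldsymbol{I}-\frac1n\boldsymbol{1}\boldsymbol{1}^T)\boldsymbol{X}$ with $\boldsymbol{1}$ the all-ones vector. $\lVert\cdot\rVert_F$ Frobenius norm, $\lVert\cdot\rVert_2$ spectral norm. *)

(* Defs.v *)
From HB Require Import structures.
From mathcomp Require Import all_boot all_order all_algebra.
From mathcomp Require Import all_classical all_reals all_analysis.
Set Implicit Arguments. Unset Strict Implicit. Unset Printing Implicit Defensive.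
Import Order.TTheory GRing.Theory Num.Theory.
Local Open Scope ring_scope.
Local Open Scope classical_set_scope.

Definition frob {R : realType} {m k : nat} (A : 'M[R]_(m, k)) : R :=
  Num.sqrt (\sum_(i < m) \sum_(j < k) A i j ^+ 2).

Definition specnorm {R : realType} {m k : nat} (W : 'M[R]_(m, k)) : R :=
  sup [set frob (W *m v) | v in [set v : 'cV[R]_k | frob v <= 1]].

Definition softmax {R : realType} {n : nat} (P : 'M[R]_n) : 'M[R]_n :=
  \matrix_(i, j) (expR (P i j) / \sum_(t < n) expR (P i t)).

Definition HC {R : realType} {n d : nat} (X : 'M[R]_(n, d)) : 'M[R]_(n, d) :=
  (1%:M - (n%:R)^-1 *: const_mx 1) *m X.

Definition MSA {R : realType} {H n d : nat} (P : 'I_H -> 'M[R]_n)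
  (WV WO : 'I_H -> 'M[R]_d) (X : 'M[R]_(n, d)) : 'M[R]_(n, d) :=
  \sum_(h < H) (softmax (P h) *m X *m WV h *m WO h).

Definition alpha_of {R : realType} {H n : nat} (P : 'I_H -> 'M[R]_n) : R :=
  \big[Num.max/0]_(h < H) \big[Num.max/0]_(i < n) \big[Num.max/0]_(j < n) `|P h i j|.

Definition maxspec {R : realType} {H d : nat} (W : 'I_H -> 'M[R]_d) : R :=
  \big[Num.max/0]_(h < H) specnorm (W h).

(* Main.v *)
Require Import Defs.
From HB Require Import structures.
From mathcomp Require Import all_boot all_order all_algebra.
From mathcomp Require Import all_classical all_reals all_analysis.
From mathcomp Require Import ring lra.
Import Order.TTheory GRing.Theory Num.Theory.
Local Open Scope ring_scope.
Set Implicit Arguments. Unset Strict Implicit.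

Section Aux.
Variable R : realType.

Lemma sum_sq0 (I : finType) (x : I -> R) :
  \sum_i x i ^+ 2 = 0 -> forall i, x i = 0.
Proof.
move=> h i; have /psumr_eq0P H0 := h.
have := H0 (fun j _ => sqr_ge0 (x j)) i isT.
by move/eqP; rewrite sqrf_eq0 => /eqP.
Qed.

Lemma CS (I : finType) (x y : I -> R) :
  \sum_i x i * y i <= Num.sqrt (\sum_i x i ^+ 2) * Num.sqrt (\sum_i y i ^+ 2).
Proof.
set a := Num.sqrt _; set b := Num.sqrt _.
have sa : a ^+ 2 = \sum_i x i ^+ 2 by rewrite sqr_sqrtr // sumr_ge0 // => i _; apply: sqr_ge0.
have sb : b ^+ 2 = \sum_i y i ^+ 2 by rewrite sqr_sqrtr // sumr_ge0 // => i _; apply: sqr_ge0.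
have a0 : 0 <= a by apply: sqrtr_ge0.
have b0 : 0 <= b by apply: sqrtr_ge0.
have [aE|an0] := eqVneq a 0.
  have /sum_sq0 hx : \sum_i x i ^+ 2 = 0 by rewrite -sa aE expr0n.
  by rewrite aE mul0r big1 // => i _; rewrite hx mul0r.
have [bE|bn0] := eqVneq b 0.
  have /sum_sq0 hy : \sum_i y i ^+ 2 = 0 by rewrite -sb bE expr0n.
  by rewrite bE mulr0 big1 // => i _; rewrite hy mulr0.
have ab : 0 < a * b by rewrite mulr_gt0 // lt0r ?an0 ?bn0.
have key : 2 * (a * b) * \sum_i x i * y i <= 2 * (a * b) * (a * b).
  have e : 2 * (a * b) * (a * b) = \sum_i (b ^+ 2 * x i ^+ 2 + a ^+ 2 * y i ^+ 2).
    by rewrite big_split /= -!mulr_sumr -sa -sb; ring.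
  rewrite e mulr_sumr ler_sum // => i _.
  rewrite -subr_ge0.
  have -> : b ^+ 2 * x i ^+ 2 + a ^+ 2 * y i ^+ 2 - 2 * (a * b) * (x i * y i) = (b * x i - a * y i) ^+ 2 by ring.
  exact: sqr_ge0.
have h2 : 0 < 2 * (a * b) by rewrite mulr_gt0.
by rewrite ler_pM2l // in key.
Qed.

Lemma sqrt_le_mul (a b c : R) : 0 <= c -> 0 <= b -> a <= c ^+ 2 * b ->
  Num.sqrt a <= c * Num.sqrt b.
Proof.
move=> c0 b0 h.
rewrite -(ger0_norm c0) -sqrtr_sqr -sqrtrM ?sqr_ge0 // ler_sqrt //.
by rewrite mulr_ge0 ?sqr_ge0.
Qed.

Lemma sqrt_le (x y : R) : 0 <= y -> x <= y ^+ 2 -> Num.sqrt x <= y.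
Proof. by move=> y0 h; rewrite -(ger0_norm y0) -sqrtr_sqr ler_sqrt ?sqr_ge0. Qed.

Lemma CS2 (I : finType) (x y : I -> R) :
  (\sum_i x i * y i) ^+ 2 <= (\sum_i x i ^+ 2) * (\sum_i y i ^+ 2).
Proof.
set a := Num.sqrt (\sum_i x i ^+ 2); set b := Num.sqrt (\sum_i y i ^+ 2).
have sa : a ^+ 2 = \sum_i x i ^+ 2 by rewrite sqr_sqrtr // sumr_ge0 // => i _; apply: sqr_ge0.
have sb : b ^+ 2 = \sum_i y i ^+ 2 by rewrite sqr_sqrtr // sumr_ge0 // => i _; apply: sqr_ge0.
have h1 := CS x y; have h2 := CS (fun i => - x i) y.
have e1 : \sum_i - x i * y i = - \sum_i x i * y i.
  by rewrite -sumrN; apply: eq_bigr => i _; rewrite mulNr.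
have e2 : \sum_i (- x i) ^+ 2 = \sum_i x i ^+ 2 by apply: eq_bigr => i _; rewrite sqrrN.
rewrite e1 e2 -/a -/b in h2; rewrite -/a -/b in h1.
rewrite -sa -sb; set s := \sum_i x i * y i.
rewrite -subr_ge0.
have -> : a ^+ 2 * b ^+ 2 - s ^+ 2 = (a * b - s) * (a * b + s) by ring.
by apply: mulr_ge0; [rewrite subr_ge0 | move: h2; rewrite -subr_ge0 opprK].
Qed.

Definition mdot (m k : nat) (A B : 'M[R]_(m, k)) := \sum_i \sum_j A i j * B i j.

Lemma frob_ge0 m k (A : 'M[R]_(m, k)) : 0 <= frob A.
Proof. exact: sqrtr_ge0. Qed.

Lemma sum2_ge0 m k (A : 'M[R]_(m, k)) : 0 <= \sum_i \sum_j A i j ^+ 2.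
Proof. by apply: sumr_ge0 => i _; apply: sumr_ge0 => j _; apply: sqr_ge0. Qed.

Lemma frob_sqr m k (A : 'M[R]_(m, k)) : frob A ^+ 2 = \sum_i \sum_j A i j ^+ 2.
Proof. by rewrite /frob sqr_sqrtr // sum2_ge0. Qed.

Lemma mdot_CS m k (A B : 'M[R]_(m, k)) : mdot A B <= frob A * frob B.
Proof.
rewrite /mdot /frob !(pair_bigA _ (fun i j => _)).
exact: (CS (fun p : 'I_m * 'I_k => A p.1 p.2) (fun p => B p.1 p.2)).
Qed.

Lemma frobD m k (A B : 'M[R]_(m, k)) : frob (A + B) <= frob A + frob B.
Proof.
rewrite {1}/frob; apply: sqrt_le; first by rewrite addr_ge0 ?frob_ge0.
have : \sum_i \sum_j (A + B) i j ^+ 2 = frob A ^+ 2 + frob B ^+ 2 + 2 * mdot A B.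
  rewrite !frob_sqr /mdot mulr_sumr -!big_split /=; apply: eq_bigr => i _.
  rewrite mulr_sumr -!big_split /=; apply: eq_bigr => j _; rewrite mxE; ring.
move=> ->; have := mdot_CS A B; rewrite /frob => h.
set a := Num.sqrt _ in h *; set b := Num.sqrt _ in h *.
rewrite -subr_ge0.
have -> : (a + b) ^+ 2 - (a ^+ 2 + b ^+ 2 + 2 * mdot A B) = 2 * (a * b - mdot A B) by ring.
by rewrite mulr_ge0 // subr_ge0.
Qed.

Lemma frob0 m k : frob (0 : 'M[R]_(m, k)) = 0.
Proof. by rewrite /frob big1 ?sqrtr0 // => i _; rewrite big1 // => j _; rewrite mxE expr0n. Qed.

Lemma frob_sum m k (I : finType) (F : I -> 'M[R]_(m, k)) :
  frob (\sum_i F i) <= \sum_i frob (F i).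
Proof.
apply: (big_ind2 (fun x y => frob x <= y)); first by rewrite frob0.
  by move=> x1 x2 y1 y2 h1 h2; apply: le_trans (frobD _ _) _; apply: lerD.
by [].
Qed.

Lemma frobZ m k (a : R) (A : 'M[R]_(m, k)) : frob (a *: A) = `|a| * frob A.
Proof.
rewrite /frob -sqrtr_sqr -sqrtrM ?sqr_ge0 //; congr Num.sqrt.
rewrite mulr_sumr; apply: eq_bigr => i _; rewrite mulr_sumr; apply: eq_bigr => j _.
by rewrite mxE exprMn.
Qed.

Lemma frob_tr m k (A : 'M[R]_(m, k)) : frob A^T = frob A.
Proof. by rewrite /frob exchange_big; congr Num.sqrt; apply: eq_bigr => i _; apply: eq_bigr => j _; rewrite mxE. Qed.

Lemma frob_eq0 m k (A : 'M[R]_(m, k)) : frob A = 0 -> A = 0.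
Proof.
move=> h; have : frob A ^+ 2 = 0 by rewrite h expr0n.
rewrite frob_sqr (pair_bigA _ (fun i j => _)) => h2.
have H0 := sum_sq0 h2.
by apply/matrixP => i j; rewrite mxE (H0 (i, j)).
Qed.

Lemma frob_mulL m k p (B : 'M[R]_(m, k)) (c : R) : 0 <= c ->
  (forall v : 'cV[R]_k, frob (B *m v) <= c * frob v) ->
  forall M : 'M[R]_(k, p), frob (B *m M) <= c * frob M.
Proof.
move=> c0 hv M.
have hcol : forall j : 'I_p, \sum_i (B *m M) i j ^+ 2 <= c ^+ 2 * \sum_i M i j ^+ 2.
  move=> j; pose v : 'cV[R]_k := \col_i M i j.
  have := hv v; rewrite -[_ <= _](@ler_pXn2r _ 2) ?nnegrE ?frob_ge0 ?mulr_ge0 ?frob_ge0 //.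
  rewrite exprMn !frob_sqr.
  have e1 : \sum_i \sum_(j0 < 1) (B *m v) i j0 ^+ 2 = \sum_i (B *m M) i j ^+ 2.
    apply: eq_bigr => i _; rewrite big_ord1 !mxE; congr (_ ^+ 2).
    by apply: eq_bigr => l _; rewrite !mxE.
  have e2 : \sum_i \sum_(j0 < 1) v i j0 ^+ 2 = \sum_i M i j ^+ 2.
    by apply: eq_bigr => i _; rewrite big_ord1 !mxE.
  by rewrite e1 e2.
rewrite /frob; apply: sqrt_le_mul => //; first exact: sum2_ge0.
rewrite exchange_big [X in _ <= _ * X]exchange_big mulr_sumr; exact: ler_sum.
Qed.

Lemma frob_mul_crude m k (W : 'M[R]_(m, k)) (v : 'cV[R]_k) : frob (W *m v) <= frob W * frob v.
Proof.
rewrite {1}/frob; apply: sqrt_le; first by rewrite mulr_ge0 ?frob_ge0.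
rewrite exprMn !frob_sqr mulr_suml; apply: ler_sum => i _.
rewrite big_ord1 mxE.
have -> : \sum_i0 \sum_(j < 1) v i0 j ^+ 2 = \sum_j v j 0 ^+ 2 by apply: eq_bigr => j _; rewrite big_ord1.
exact: (CS2 (fun j => W i j) (fun j => v j 0)).
Qed.

Lemma sn_set_has_sup m k (W : 'M[R]_(m, k)) :
  has_sup [set frob (W *m v) | v in [set v : 'cV[R]_k | frob v <= 1]].
Proof.
split.
  exists (frob (W *m (0 : 'cV[R]_k))); exists 0 => //=; rewrite frob0; exact: ler01.
exists (frob W) => _ [v /= hv <-].
apply: le_trans (frob_mul_crude W v) _.
by rewrite -[X in _ <= X]mulr1 ler_wpM2l ?frob_ge0.
Qed.

Lemma sn_ub m k (W : 'M[R]_(m, k)) (v : 'cV[R]_k) : frob v <= 1 -> frob (W *m v) <= specnorm W.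
Proof. by move=> hv; apply: (sup_upper_bound (sn_set_has_sup W)); exists v. Qed.

Lemma sn_ge0 m k (W : 'M[R]_(m, k)) : 0 <= specnorm W.
Proof. by have := @sn_ub _ _ W 0; rewrite mulmx0 !frob0; move/(_ ler01). Qed.

Lemma sn_bound m k (W : 'M[R]_(m, k)) (v : 'cV[R]_k) : frob (W *m v) <= specnorm W * frob v.
Proof.
have [h0|hn] := eqVneq (frob v) 0.
  by rewrite (frob_eq0 h0) mulmx0 !frob0 mulr0.
have fp : 0 < frob v by rewrite lt0r hn frob_ge0.
have := @sn_ub _ _ W ((frob v)^-1 *: v).
rewrite frobZ ger0_norm ?invr_ge0 ?frob_ge0 // mulVf // lexx -scalemxAr frobZ.
rewrite ger0_norm ?invr_ge0 ?frob_ge0 // => /(_ isT).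
by rewrite ler_pdivrMl // mulrC.
Qed.

Lemma sn_tr_bound m k (W : 'M[R]_(m, k)) (u : 'cV[R]_m) : frob (W^T *m u) <= specnorm W * frob u.
Proof.
set y := W^T *m u.
have e : frob y ^+ 2 = mdot (W *m y) u.
  rewrite frob_sqr /mdot /y.
  under eq_bigr do rewrite big_ord1.
  under [RHS]eq_bigr do rewrite big_ord1.
  under eq_bigr => j _ do rewrite expr2 {2}mxE mulr_sumr.
  rewrite exchange_big /=; apply: eq_bigr => i _.
  rewrite mxE mulr_suml; apply: eq_bigr => j _; rewrite !mxE; ring.
have h : frob y ^+ 2 <= frob y * (specnorm W * frob u).
  rewrite e; apply: le_trans (mdot_CS _ _) _.
  rewrite mulrA [frob y * _]mulrC; apply: ler_wpM2r; first exact: frob_ge0.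
  exact: sn_bound.
have [h0|hn] := eqVneq (frob y) 0; first by rewrite h0 mulr_ge0 ?sn_ge0 ?frob_ge0.
have fp : 0 < frob y by rewrite lt0r hn frob_ge0.
by rewrite expr2 ler_pM2l in h.
Qed.

Lemma frob_mulR m k p (M : 'M[R]_(m, k)) (W : 'M[R]_(k, p)) : frob (M *m W) <= frob M * specnorm W.
Proof.
rewrite -frob_tr trmx_mul -(frob_tr M) mulrC.
apply: frob_mulL; first exact: sn_ge0.
exact: sn_tr_bound.
Qed.

Lemma jensen_row (k : nat) (a x : 'I_k -> R) : (forall j, 0 <= a j) -> \sum_j a j = 1 ->
  (\sum_j a j * x j) ^+ 2 <= \sum_j a j * x j ^+ 2.
Proof.
move=> a0 a1.
have e : forall c, \sum_j a j * (x j - c) ^+ 2 =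
   \sum_j a j * x j ^+ 2 - 2 * c * \sum_j a j * x j + c ^+ 2 * \sum_j a j.
  move=> c; rewrite !mulr_sumr -sumrN -!big_split /=; apply: eq_bigr => j _; ring.
set m := \sum_j a j * x j.
have h : 0 <= \sum_j a j * (x j - m) ^+ 2 by apply: sumr_ge0 => j _; rewrite mulr_ge0 ?sqr_ge0.
rewrite e a1 -/m in h; rewrite -subr_ge0; move: h; congr (0 <= _); ring.
Qed.

Lemma stoch_bound n (A : 'M[R]_n) (e : R) : (forall i j, 0 <= A i j) ->
  (forall i, \sum_j A i j = 1) -> (forall i j, A i j <= e) ->
  forall v : 'cV[R]_n, frob (A *m v) <= Num.sqrt (n%:R * e) * frob v.
Proof.
move=> A0 A1 Ae v.
have ne0 : 0 <= n%:R * e.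
  by case: n A A0 A1 Ae v => [|n'] A A0 A1 Ae v; rewrite ?mul0r // mulr_ge0 // (le_trans (A0 ord0 ord0)).
rewrite /frob; apply: sqrt_le_mul; rewrite ?sqrtr_ge0 ?sum2_ge0 // sqr_sqrtr //.
have step : forall i, (A *m v) i 0 ^+ 2 <= \sum_j A i j * v j 0 ^+ 2.
  by move=> i; rewrite mxE; apply: jensen_row.
apply: (@le_trans _ _ (\sum_i \sum_j A i j * v j 0 ^+ 2)).
  by apply: ler_sum => i _; rewrite big_ord1; apply: step.
rewrite exchange_big mulr_sumr; apply: ler_sum => j _; rewrite big_ord1 -mulr_suml.
apply: ler_wpM2r; first exact: sqr_ge0.
apply: (@le_trans _ _ (\sum_(i < n) e)); first by apply: ler_sum => i _.
by rewrite sumr_const card_ord mulr_natl.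
Qed.

Lemma softmax_ge0 n (P : 'M[R]_n) i j : 0 <= softmax P i j.
Proof.
rewrite /softmax mxE divr_ge0 ?expR_ge0 //.
by apply: sumr_ge0 => t _; apply: expR_ge0.
Qed.

Lemma softmax_sum n (P : 'M[R]_n) i : \sum_j softmax P i j = 1.
Proof.
rewrite /softmax.
under eq_bigr do rewrite mxE.
rewrite -mulr_suml divff // gt_eqF //.
by rewrite (bigD1 i) //= ltr_pwDl ?expR_gt0 // sumr_ge0 // => t _; apply: expR_ge0.
Qed.

Lemma softmax_le n (P : 'M[R]_n) (al : R) : (forall i j, `|P i j| <= al) ->
  forall i j, softmax P i j <= expR (2 * al) / (expR (2 * al) + n%:R - 1).
Proof.
move=> hP i j.
have n1 : (1 <= n%:R :> R) by rewrite ler1n; case: n P hP i j => [|n'] P hP [].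
have [hl hu] : - al <= P i j /\ P i j <= al by move: (hP i j); rewrite ler_norml => /andP.
set x := expR (P i j); set S := \sum_t expR (P i t).
set ea := expR al; set c := expR (- al); set E := expR (2 * al).
have ea0 : 0 < ea by apply: expR_gt0.
have c0 : 0 < c by apply: expR_gt0.
have Eea : E = ea * ea by rewrite /E /ea -expRD; congr expR; ring.
have Ec : E * c = ea by rewrite Eea /c expRN -mulrA mulfV ?gt_eqF // mulr1.
have xea : x <= ea by rewrite /x /ea ler_expR.
have x0 : 0 < x by apply: expR_gt0.
have Sx : x + (n%:R - 1) * c <= S.
  rewrite /S (bigD1 j) //= lerD2l.
  have : \sum_(t < n | t != j) c = (n%:R - 1) * c.
    have h : c *+ n = c + \sum_(t < n | t != j) c.
      by rewrite -[in LHS](card_ord n) -sumr_const (bigD1 j).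
    have -> : \sum_(t < n | t != j) c = c *+ n - c by rewrite h addrC addKr.
    by rewrite -mulr_natl; ring.
  move=> <-; apply: ler_sum => t _; rewrite /c ler_expR.
  by move: (hP i t); rewrite ler_norml => /andP [].
have S0 : 0 < S by apply: lt_le_trans Sx; apply: ltr_pwDl => //; rewrite mulr_ge0 ?subr_ge0 // ltW.
have D0 : 0 < E + n%:R - 1 by rewrite -addrA ltr_pwDl ?subr_ge0 // /E expR_gt0.
rewrite /softmax mxE -/x -/S ler_pdivrMr // mulrAC ler_pdivlMr //.
have E0 : 0 <= E by rewrite Eea mulr_ge0 // ltW.
have h1 : E * (x + (n%:R - 1) * c) <= E * S by rewrite ler_wpM2l.
have h2 : x * (n%:R - 1) <= ea * (n%:R - 1) by rewrite ler_wpM2r ?subr_ge0.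
have h3 : E * (x + (n%:R - 1) * c) = E * x + (n%:R - 1) * ea by rewrite -Ec; ring.
rewrite h3 in h1.
have h4 : x * (E + n%:R - 1) = E * x + x * (n%:R - 1) by ring.
rewrite h4; lra.
Qed.

Definition Cn n : 'M[R]_n := 1%:M - (n%:R)^-1 *: const_mx 1.

Lemma HCE n d (X : 'M[R]_(n, d)) : HC X = Cn n *m X.
Proof. by []. Qed.

Lemma Cn_v n (v : 'cV[R]_n) i : (Cn n *m v) i 0 = v i 0 - (n%:R)^-1 * \sum_k v k 0.
Proof.
rewrite /Cn mulmxBl mul1mx -scalemxAl !mxE; congr (_ - _ * _).
by apply: eq_bigr => k _; rewrite mxE mul1r.
Qed.

Lemma Cn_bound n (v : 'cV[R]_n) : (0 < n)%N -> frob (Cn n *m v) <= 1 * frob v.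
Proof.
move=> n0; rewrite /frob; apply: sqrt_le_mul => //; first exact: sum2_ge0.
rewrite expr1n mul1r.
under eq_bigr do rewrite big_ord1 Cn_v.
under [X in _ <= X]eq_bigr do rewrite big_ord1.
set m := (n%:R)^-1 * \sum_k v k 0.
have Sm : \sum_k v k 0 = n%:R * m by rewrite /m mulrA mulfV ?mul1r // pnatr_eq0 -lt0n.
have e : \sum_i (v i 0 - m) ^+ 2 = \sum_i v i 0 ^+ 2 - 2 * m * \sum_k v k 0 + \sum_(i < n) m ^+ 2.
  by rewrite mulr_sumr -sumrN -!big_split /=; apply: eq_bigr => i _; ring.
rewrite e sumr_const card_ord -[m ^+ 2 *+ n]mulr_natr Sm -subr_ge0.
have -> : forall s : R, s - (s - 2 * m * (n%:R * m) + m ^+ 2 * n%:R) = n%:R * m ^+ 2 by move=> s; ring.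
by rewrite mulr_ge0 ?sqr_ge0.
Qed.

Lemma HC_proj n d (Y : 'M[R]_(n, d)) : (0 < n)%N -> frob (Cn n *m Y) <= frob Y.
Proof.
move=> n0; rewrite -[frob Y]mul1r; apply: frob_mulL => // v; exact: Cn_bound.
Qed.

Lemma HC_mulA n d (A : 'M[R]_n) (X : 'M[R]_(n, d)) : (0 < n)%N ->
  (forall i, \sum_j A i j = 1) -> Cn n *m (A *m X) = Cn n *m (A *m (Cn n *m X)).
Proof.
move=> n0 A1.
have AJ : A *m (const_mx 1 : 'M[R]_n) = const_mx 1.
  by apply/matrixP => i j; rewrite !mxE -[RHS](A1 i); apply: eq_bigr => k _; rewrite mxE mulr1.
have JJ : (const_mx 1 : 'M[R]_n) *m (const_mx 1 : 'M[R]_n) = n%:R *: (const_mx 1 : 'M[R]_n).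
  apply/matrixP => i j; rewrite !mxE.
  under eq_bigr do rewrite !mxE mulr1.
  by rewrite sumr_const card_ord mulr1 -mulr_natl mulr1.
have CJ : Cn n *m (const_mx 1 : 'M[R]_n) = 0.
  rewrite /Cn mulmxBl mul1mx -scalemxAl JJ scalerA mulVf ?scale1r ?subrr //.
  by rewrite pnatr_eq0 -lt0n.
have CX : Cn n *m X = X - (n%:R)^-1 *: ((const_mx 1 : 'M[R]_n) *m X).
  by rewrite /Cn mulmxBl mul1mx -scalemxAl.
rewrite CX mulmxBr -scalemxAr mulmxBr -scalemxAr (mulmxA A) AJ (mulmxA (Cn n) (const_mx 1 : 'M[R]_n) X) CJ.
by rewrite mul0mx scaler0 subr0.
Qed.

End Aux.

Unset Implicit Arguments.
Theorem proposition5 (R : realType) (H n d : nat) (P : 'I_H -> 'M[R]_n)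
  (WV WO : 'I_H -> 'M[R]_d) (X : 'M[R]_(n, d)) :
  let alpha := alpha_of P in
  let sigma1 := maxspec WV in
  let sigma2 := maxspec WO in
  let X' := MSA P WV WO X + X in
  frob (HC X') <=
    (1 + sigma1 * sigma2 * H%:R *
       Num.sqrt (n%:R * expR (2 * alpha) / (expR (2 * alpha) + n%:R - 1)))
    * frob (HC X).
Proof.
cbv zeta.
set alpha := alpha_of P; set sigma1 := maxspec WV; set sigma2 := maxspec WO.
have [n0|npos] := posnP n.
  have F0 : forall k (A : 'M[R]_(n, k)), frob A = 0.
    by move=> k A; rewrite /frob big1 ?sqrtr0 // => i _; have := ltn_ord i; rewrite {2}n0.
  by rewrite !F0 mulr0.
set s := n%:R * expR (2 * alpha) / (expR (2 * alpha) + n%:R - 1).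
have hP : forall h i j, `|P h i j| <= alpha.
  move=> h i j; rewrite /alpha /alpha_of.
  apply: le_trans (le_bigmax _ _ h).
  apply: le_trans (le_bigmax _ _ i).
  exact: (le_bigmax _ (fun j => `|P h i j|) j).
have s1 : forall h, specnorm (WV h) <= sigma1 by move=> h; apply: (le_bigmax _ (fun h => specnorm (WV h)) h).
have s2 : forall h, specnorm (WO h) <= sigma2 by move=> h; apply: (le_bigmax _ (fun h => specnorm (WO h)) h).
have f0 : 0 <= frob (HC X) by apply: frob_ge0.
set c := sigma1 * sigma2 * Num.sqrt s * frob (HC X).
have head : forall h, frob (HC (softmax (P h) *m X *m WV h *m WO h)) <= c.
  move=> h; rewrite HCE !mulmxA.
  apply: le_trans (frob_mulR _ _) _.
  have -> : c = (sigma1 * (Num.sqrt s * frob (HC X))) * sigma2 by rewrite /c; ring.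
  apply: ler_pM; rewrite ?sn_ge0 ?frob_ge0 ?s2 //.
  apply: le_trans (frob_mulR _ _) _.
  rewrite [X in _ <= X]mulrC; apply: ler_pM; rewrite ?sn_ge0 ?mulr_ge0 ?frob_ge0 ?sqrtr_ge0 //.
  rewrite -mulmxA HC_mulA //; last exact: softmax_sum.
  apply: le_trans (HC_proj _ npos) _.
  rewrite HCE; apply: frob_mulL; first exact: sqrtr_ge0.
  move=> v; rewrite /s -mulrA; apply: stoch_bound.
  - exact: softmax_ge0.
  - exact: softmax_sum.
  - exact: softmax_le.
rewrite /MSA HCE mulmxDr mulmx_sumr.
apply: le_trans (frobD _ _) _.
rewrite mulrDl mul1r [X in _ <= X]addrC; apply: lerD; last exact: lexx.
apply: le_trans (frob_sum _) _.
apply: le_trans (ler_sum _ (fun h _ => head h)) _.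
rewrite sumr_const card_ord.
have -> : c *+ H = sigma1 * sigma2 * H%:R * Num.sqrt s * frob (HC X) by rewrite -mulr_natr /c; ring.
exact: lexx.
Qed.
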